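(* Let $\mathcal C\subseteq\{0,1,2\}^n$ be a trifferent code with $|\mathcal C|\ge2$. For $x,y\in\mathcal C$ let $A(x,y)=|\{i\in[n]:x_i=y_i\}|$. Then \[ \sum_{\{x,y\}\subseteq\mathcal C,\ x\ne y}2^{A(x,y)}\ \le\ 2^{n-1}|\mathcal C| . \]
   Context: Three distinct strings $x,y,z\in\{0,1,2\}^n$ are trifferent if there is a coordinate $i\in[n]$ with $x_i,y_i,z_i$ mutually distinct. A trifferent code of block length $n$ is a subset $\mathcal C\subseteq\{0,1,2\}^n$ in which any three distinct codewords are trifferent. *)

(* Defs.v *)
From mathcomp Require Import all_boot.
Set Implicit Arguments. Unset Strict Implicit. Unset Printing Implicit Defensive.

Definition word (n : nat) := (n.-tuple 'I_3)%type.

Definition trifferent_triple n (x y z : word n) : bool :=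
  [exists i : 'I_n, [&& tnth x i != tnth y i, tnth y i != tnth z i & tnth x i != tnth z i]].

Definition trifferent_code n (C : {set word n}) : bool :=
  [forall x in C, forall y in C, forall z in C,
     [&& x != y, y != z & x != z] ==> trifferent_triple x y z].

Definition agree n (x y : word n) : nat := #|[set i : 'I_n | tnth x i == tnth y i]|.

(* For an unordered pair P = {x,y}: A(P) = number of coordinates on which all
   elements of P agree; for #|P| = 2 with P = {x,y} this is exactly agree x y. *)
Definition agree_pair n (P : {set word n}) : nat :=
  #|[set i : 'I_n | [forall x in P, forall y in P, tnth x i == tnth y i]]|.

(* Main.v *)
Require Import Defs.
From mathcomp Require Import all_boot.
Set Implicit Arguments. Unset Strict Implicit. Unset Printing Implicit Defensive.

Definition nxt (a : 'I_3) (b : bool) : 'I_3 := inord ((a + 1 + b) %% 3).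
Definition third (a b : 'I_3) : 'I_3 := inord (3 - a - b).

Lemma val_nxt a b : val (nxt a b) = (a + 1 + b) %% 3.
Proof. by rewrite /nxt /= inordK // ltn_pmod. Qed.
Lemma val_third a b : a != b -> val (third a b) = 3 - a - b.
Proof.
rewrite /third => ab /=; rewrite inordK //.
by case: a ab => [[|[|[|k]]] Ha] //; case: b => [[|[|[|l]]] Hb].
Qed.

Lemma nxt_neq a b : nxt a b != a.
Proof. rewrite -val_eqE val_nxt. by case: a => [[|[|[|k]]] Ha] //; case: b. Qed.

Lemma nxt_inj a b c : nxt a b = nxt a c -> b = c.
Proof. move/(congr1 val); rewrite !val_nxt. by case: a => [[|[|[|k]]] Ha] //; case: b; case: c. Qed.

Lemma third_neq a b : a != b -> (third a b != a) && (third a b != b).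
Proof. move=> ab; rewrite -!val_eqE val_third //.
by case: a ab => [[|[|[|k]]] Ha] //; case: b => [[|[|[|l]]] Hb]. Qed.

Lemma nxt_av a w : w != a -> w = nxt a (w == nxt a true).
Proof. rewrite -!val_eqE => h; apply: val_inj; rewrite !val_nxt /=; rewrite ?val_nxt.
by move: h; case: a => [[|[|[|k]]] Ha] //; case: w => [[|[|[|l]]] Hb]. Qed.

Lemma no4 (a b c d : 'I_3) : a != b -> b != c -> a != c -> d != a -> d != b -> d != c -> False.
Proof. rewrite -!val_eqE.
by case: a => [[|[|[|k]]] Ha] //; case: b => [[|[|[|l]]] Hb] //; case: c => [[|[|[|m]]] Hc] //; case: d => [[|[|[|p]]] Hd]. Qed.

Lemma arith n S c : 2 * S <= 2 ^ n * c -> S <= 2 ^ (n - 1) * c.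
Proof.
case: n => [|m] H.
  rewrite expn0 mul1n in H *; apply: leq_trans H; by rewrite leq_pmull.
by rewrite expnS -mulnA leq_mul2l /= subSS subn0 in H *.
Qed.

Section Main.
Variable n : nat.

Definition av (x w : word n) := [forall i, tnth w i != tnth x i].
Definition Av (P : {set word n}) := [set w : word n | [forall z in P, av z w]].

Lemma card_av x : #|[set w : word n | av x w]| <= 2 ^ n.
Proof.
pose g (w : word n) := [set i : 'I_n | tnth w i == nxt (tnth x i) true].
rewrite -(card_in_imset (f := g)); last first.
  move=> w1 w2; rewrite !inE => /forallP h1 /forallP h2 e.
  apply: eq_from_tnth => i.
  rewrite (nxt_av (h1 i)) (nxt_av (h2 i)).
  by move/setP: e => /(_ i); rewrite !inE => ->.
have -> : 2 ^ n = #|powerset [set: 'I_n]| by rewrite card_powerset cardsT card_ord.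
apply: subset_leq_card; apply/subsetP => T _; by rewrite powersetE subsetT.
Qed.

Lemma agree_pair2 (x y : word n) i :
  (i \in [set i : 'I_n | [forall a in [set x; y], forall b in [set x; y], tnth a i == tnth b i]])
   = (tnth x i == tnth y i).
Proof.
rewrite inE; apply/idP/idP.
  by move/forall_inP/(_ x (set21 _ _))/forall_inP/(_ y (set22 _ _)).
move=> e; apply/forall_inP => a; rewrite !inE => /orP[]/eqP->;
  apply/forall_inP => b; rewrite !inE => /orP[]/eqP->; by rewrite ?eqxx // eq_sym.
Qed.

Lemma pair_bound (x y : word n) : x != y -> 2 ^ agree_pair [set x; y] <= #|Av [set x; y]|.
Proof.
move=> xy.
rewrite /agree_pair.
set S := [set i : 'I_n | _].
pose f (T : {set 'I_n}) : word n :=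
  [tuple (if tnth x i == tnth y i then nxt (tnth x i) (i \in T) else third (tnth x i) (tnth y i)) | i < n].
rewrite -card_powerset -(card_in_imset (f := f)); last first.
  move=> T1 T2; rewrite !powersetE => s1 s2 e; apply/setP => i.
  have := congr1 (fun w => tnth w i) e; rewrite /f !tnth_mktuple.
  case: ifP => hi.
    by move/nxt_inj.
  have hS : i \notin S by rewrite agree_pair2 hi.
  move=> _; apply/idP/idP => hT.
    by move: hS; rewrite (subsetP s1 _ hT).
  by move: hS; rewrite (subsetP s2 _ hT).
apply: subset_leq_card; apply/subsetP => w /imsetP [T _ ->].
rewrite inE; apply/forall_inP => z; rewrite !inE => /orP[]/eqP-> ; apply/forallP => i;
  rewrite tnth_mktuple; case: ifP => [/eqP e|/negbT ne].
- exact: nxt_neq.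
- by case/andP: (third_neq ne).
- rewrite -e; exact: nxt_neq.
- by case/andP: (third_neq ne).
Qed.

Lemma exch (I J : finType) (A : {set I}) (R : I -> J -> bool) :
  \sum_(a in A) #|[set b | R a b]| = \sum_b #|[set a in A | R a b]|.
Proof.
have cE (p : pred _) : #|[set b | p b]| = \sum_b (p b : nat).
  by rewrite -sum1_card big_mkcond /=; apply: eq_bigr => b _; rewrite inE; case: (p b).
under eq_bigr do rewrite cE.
under [RHS]eq_bigr do rewrite cE.
rewrite exchange_big /=; apply: eq_bigr => b _.
by rewrite big_mkcond /=; apply: eq_bigr => a _; case: (a \in A).
Qed.

End Main.

Theorem mainTheorem12 (n : nat) (C : {set word n}) :
  trifferent_code C -> 2 <= #|C| ->
  \sum_(P in [set P : {set word n} | (P \subset C) && (#|P| == 2)])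
     2 ^ agree_pair P
  <= 2 ^ (n - 1) * #|C|.
Proof.
move=> tC _.
set PS := [set P : {set word n} | _].
have key : forall P w, P \in PS -> [forall z in P, av z w] -> P = [set x in C | av x w].
  move=> P w; rewrite inE => /andP [PC /cards2P [x [y [xy eP]]]]; rewrite eP in PC * => /forall_inP hw.
  apply/setP => z; rewrite [in RHS]inE; apply/idP/idP.
    by move=> hz; rewrite (subsetP PC _ hz) (hw z hz).
  case/andP => zC zw.
  have xC : x \in C by apply: (subsetP PC); rewrite !inE eqxx.
  have yC : y \in C by apply: (subsetP PC); rewrite !inE eqxx orbT.
  have wx := hw x (set21 _ _). have wy := hw y (set22 _ _).
  apply/negPn/negP; rewrite !inE negb_or => /andP [zx zy].
  move/forall_inP: tC => /(_ x xC)/forall_inP/(_ y yC)/forall_inP/(_ z zC)/implyP.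
  rewrite xy eq_sym zy eq_sym zx => /(_ isT) /existsP [i /and3P [h1 h2 h3]].
  move/forallP: wx => /(_ i) wx. move/forallP: wy => /(_ i) wy. move/forallP: zw => /(_ i) wz.
  exact: (no4 h1 h2 h3 wx wy wz).
have per_w : forall w, 2 * #|[set P in PS | [forall z in P, av z w]]| <= #|[set x in C | av x w]|.
  move=> w.
  have sub : [set P in PS | [forall z in P, av z w]] \subset [set [set x in C | av x w]].
    apply/subsetP => P; rewrite inE => /andP [h1 h2]; by rewrite (key P w h1 h2) in_set1.
  have := subset_leq_card sub; rewrite cards1.
  case: (posnP #|[set P in PS | [forall z in P, av z w]]|) => [-> //|].
  move=> /[dup] pos /card_gt0P [P]; rewrite inE => /andP [h1 h2] h3.
  have e : #|[set P in PS | [forall z in P, av z w]]| = 1 by apply/eqP; rewrite eqn_leq h3 pos.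
  rewrite e -(key P w h1 h2); move: h1; rewrite inE => /andP [_ /eqP ->] //.
have H : 2 * \sum_(P in PS) 2 ^ agree_pair P <= 2 ^ n * #|C|.
  apply: (@leq_trans (2 * \sum_(P in PS) #|Av P|)).
    rewrite leq_mul2l; apply/orP; right; apply: leq_sum => P.
    rewrite inE => /andP [_ /cards2P [x [y [xy ->]]]]; exact: pair_bound.
  rewrite /Av (exch PS (fun P w => [forall z in P, av z w])) big_distrr /=.
  apply: (@leq_trans (\sum_w #|[set x in C | av x w]|)).
    by apply: leq_sum => w _; apply: per_w.
  rewrite -(exch C (fun x w => av x w)).
  apply: (@leq_trans (\sum_(x in C) 2 ^ n)).
    by apply: leq_sum => x _; apply: card_av.
  by rewrite sum_nat_const mulnC.
exact: arith H.
Qed.
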